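(* Let $0<\alpha<1$ and for integers $t\ge 1$ define $$S(t)\triangleq\sum_{i=1}^{t-1}\frac{\alpha^{t-i}}{i+1}$$ (so $S(1)=0$). Let $t_0=\left\lceil \frac{2\alpha}{1-\alpha}\right\rceil$ and $A=\max\left\{t_0\, S(t_0),\ \frac{2\alpha}{1-\alpha}\right\}$. Then for all integers $t\ge t_0$, $$S(t)\le \frac{A}{t}.$$
   Context: In the paper, $\alpha=(1-\eta\mu)^E$ is the contraction factor of $E$ gradient-descent steps with step size $\eta\in(0,\frac{2}{\mu+L}]$ on a $\mu$-strongly convex, $L$-smooth function. *)

(* Defs.v *)
From mathcomp Require Import all_boot all_order all_algebra.
Set Implicit Arguments. Unset Strict Implicit. Unset Printing Implicit Defensive.
Import Order.TTheory GRing.Theory Num.Theory.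
Local Open Scope ring_scope.

Definition S_sum (R : archiRealFieldType) (alpha : R) (t : nat) : R :=
  \sum_(1 <= i < t) alpha ^+ (t - i) / (i.+1)%:R.

Definition t0 (R : archiRealFieldType) (alpha : R) : int :=
  Num.ceil (2 * alpha / (1 - alpha)).

(* A = max { t0 * S(t0), 2 alpha / (1 - alpha) }; S is evaluated at the
   natural number |t0| (t0 >= 1 when 0 < alpha < 1). *)
Definition A_const (R : archiRealFieldType) (alpha : R) : R :=
  Num.max ((t0 alpha)%:~R * S_sum alpha `|t0 alpha|%N) (2 * alpha / (1 - alpha)).

(* Main.v *)
Require Import Defs.
From mathcomp Require Import all_boot all_order all_algebra.
From mathcomp Require Import lra.
Import Order.TTheory GRing.Theory Num.Theory.
Local Open Scope ring_scope.

Lemma S_rec (R : archiRealFieldType) (alpha : R) (t : nat) : (1 <= t)%N ->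
  S_sum alpha t.+1 = alpha * S_sum alpha t + alpha / t.+1%:R.
Proof.
move=> ht; rewrite /S_sum big_nat_recr //= subSn // subnn expr1; congr (_ + _).
rewrite mulr_sumr; apply: eq_big_nat => i /andP [_ hi].
by rewrite subSn ?(ltnW hi) // exprS mulrA.
Qed.

Theorem proposition1 (R : archiRealFieldType) (alpha : R)
  (h0 : 0 < alpha) (h1 : alpha < 1) (t : nat)
  (ht1 : (1 <= t)%N) (ht : t0 alpha <= t%:Z) :
  S_sum alpha t <= A_const alpha / t%:R.
Proof.
set c := 2 * alpha / (1 - alpha).
have c0 : 0 < c by rewrite /c divr_gt0 // ?subr_gt0 // mulr_gt0.
have z0 : 0 < t0 alpha by rewrite /t0 ceil_gt0.
set n := `|t0 alpha|%N.
have zn : t0 alpha = n%:Z by rewrite /n gez0_abs // ltW.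
have n1 : (1 <= n)%N by rewrite -(ltz_nat 0) -zn.
have cn : c <= n%:R by have := ceil_ge c; rewrite -/(t0 alpha) zn.
have Ac : c <= A_const alpha by rewrite /A_const le_max lexx orbT.
have An : n%:R * S_sum alpha n <= A_const alpha.
  by rewrite /A_const le_max zn lexx.
have tn : (n <= t)%N by rewrite -lez_nat -zn.
rewrite -(subnKC tn); elim: (t - n)%N => [|k IH].
  rewrite addn0 ler_pdivlMr ?ltr0n // mulrC //.
have hk : (1 <= n + k)%N by rewrite (leq_trans n1) ?leq_addr.
rewrite addnS S_rec //.
set m := (n + k)%N in hk IH *.
set S := S_sum alpha m in IH *.
set A := A_const alpha in Ac An IH *.
have m0 : 0 < m%:R :> R by rewrite ltr0n.
have cm : c <= m%:R by rewrite (le_trans cn) // ler_nat leq_addr.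
rewrite -natr1.
have hc : c * (1 - alpha) = 2 * alpha by rewrite /c divfK // subr_eq0 gt_eqF.
have key : alpha * m%:R <= A * ((1 - alpha) * m%:R - alpha).
  have h2 : 2 * alpha <= (1 - alpha) * m%:R.
    by rewrite -hc mulrC ler_wpM2l // subr_ge0 ltW.
  have h3 : c * ((1 - alpha) * m%:R - alpha) <= A * ((1 - alpha) * m%:R - alpha).
    by rewrite ler_wpM2r // ?subr_ge0; lra.
  apply: le_trans h3.
  have : c * (2 * alpha) <= c * ((1 - alpha) * m%:R) by rewrite ler_wpM2l // ltW.
  rewrite -hc; nra.
set x := A / m%:R in IH *.
have Ax : A = x * m%:R by rewrite /x divfK // gt_eqF.
rewrite Ax in key.
have key2 : alpha <= x * ((1 - alpha) * m%:R - alpha).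
  by rewrite -(ler_pM2r m0); move: key; rewrite mulrC; nra.
have hS : alpha * S <= alpha * x by rewrite ler_wpM2l // ltW.
apply: (le_trans (lerD hS (lexx _))).
have m1 : 0 < m%:R + 1 :> R by lra.
rewrite Ax ler_pdivlMr // mulrDl divfK ?gt_eqF //.
nra.
Qed.
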